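(* In the quantum number-in-hand network model on $k$-node graphs, there is a quantum protocol with communication cost $O(k\log^2 k)$ qubits which, with probability at least $2/3$, correctly decides whether the input graph $G$ contains no induced subgraph isomorphic to the path $P_3$ on three nodes (two edges).
   Context: Quantum number-in-hand (NIH) network model: the input is an undirected graph $G=(V,E)$ without self-loops on $V=[k]$; player $v\in[k]$ receives only $\nu_v\in\{0,1\}^k$, the characteristic vector of its neighborhood $N(v)$; each player sends one quantum message depending only on its own input (no shared randomness or entanglement) to a referee, who outputs the answer. The cost is the total number of qubits sent. *)

(* Defs.v *)
From HB Require Import structures.
From mathcomp Require Import all_boot all_algebra.
From mathcomp Require Import reals complex.
Set Implicit Arguments. Unset Strict Implicit. Unset Printing Implicit Defensive.
Import GRing.Theory Num.Theory.
Local Open Scope ring_scope.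

(* Complex numbers: C = R[i] for a real field R : realType (any realType is
   isomorphic to the reals). Operators on a finite-dimensional Hilbert space
   with orthonormal basis indexed by a finType T are functions T -> T -> R[i]
   (matrix entries <i|A|j> = A i j). *)

Definition hermitian (R : realType) (T : finType) (A : T -> T -> R[i]) : Prop :=
  forall i j, A j i = (A i j)^*.

Definition psd (R : realType) (T : finType) (A : T -> T -> R[i]) : Prop :=
  forall x : T -> R[i], 0 <= \sum_i \sum_j (x i)^* * A i j * x j.

Definition density (R : realType) (T : finType) (A : T -> T -> R[i]) : Prop :=
  [/\ hermitian A, psd A & \sum_i A i i = 1].

(* measurement effect 0 <= E <= I (the "accept" element of a two-outcome POVM
   {E, I - E}) *)
Definition effect (R : realType) (T : finType) (E : T -> T -> R[i]) : Prop :=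
  [/\ hermitian E, psd E & psd (fun i j => (i == j)%:R - E i j)].

Definition tr_prod (R : realType) (T : finType) (E rho : T -> T -> R[i]) : R[i] :=
  \sum_i \sum_j E i j * rho j i.

Definition simple_graph (k : nat) (adj : 'I_k -> 'I_k -> bool) : Prop :=
  (forall u v, adj u v = adj v u) /\ (forall v, ~~ adj v v).

(* the input of player v : characteristic vector of N(v) *)
Definition nbhd_vec (k : nat) (adj : 'I_k -> 'I_k -> bool) (v : 'I_k)
  : {ffun 'I_k -> bool} := [ffun u => adj v u].

Definition has_induced_P3 (k : nat) (adj : 'I_k -> 'I_k -> bool) : Prop :=
  exists a b c : 'I_k,
    [/\ a != b, b != c, a != c & [&& adj a b, adj b c & ~~ adj a c]].

(* Quantum NIH protocol on k players: player v sends msg_qubits v qubits, in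
   the (mixed) state msg v nu, which depends only on v and its input nu; no
   shared randomness / entanglement, so the referee receives the tensor
   product of the messages; the referee then performs a two-outcome
   measurement with accepting effect [accept] (this is fully general). *)
Record qnih_protocol (R : realType) (k : nat) := QNIH {
  msg_qubits : 'I_k -> nat;
  msg : forall v : 'I_k, {ffun 'I_k -> bool} ->
          'I_(2 ^ msg_qubits v) -> 'I_(2 ^ msg_qubits v) -> R[i];
  accept : {dffun forall v : 'I_k, 'I_(2 ^ msg_qubits v)} ->
           {dffun forall v : 'I_k, 'I_(2 ^ msg_qubits v)} -> R[i]
}.
Arguments msg_qubits {R k} _ _.
Arguments msg {R k} _ _ _ _ _.
Arguments accept {R k} _ _ _.

Definition qnih_valid (R : realType) (k : nat) (P : qnih_protocol R k) : Prop :=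
  (forall v nu, density (msg P v nu)) /\ effect (accept P).

Definition qnih_cost (R : realType) (k : nat) (P : qnih_protocol R k) : nat :=
  \sum_(v < k) msg_qubits P v.

Definition qnih_joint (R : realType) (k : nat) (P : qnih_protocol R k)
  (adj : 'I_k -> 'I_k -> bool) :
  {dffun forall v : 'I_k, 'I_(2 ^ msg_qubits P v)} ->
  {dffun forall v : 'I_k, 'I_(2 ^ msg_qubits P v)} -> R[i] :=
  fun b b' => \prod_(v < k) msg P v (nbhd_vec adj v) (b v) (b' v).

Definition qnih_accept_prob (R : realType) (k : nat) (P : qnih_protocol R k)
  (adj : 'I_k -> 'I_k -> bool) : R[i] :=
  tr_prod (accept P) (@qnih_joint R k P adj).

Definition qnih_decides (R : realType) (k : nat) (P : qnih_protocol R k)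
  (Q : ('I_k -> 'I_k -> bool) -> Prop) : Prop :=
  forall adj, simple_graph adj ->
    (Q adj -> 2%:R / 3%:R <= qnih_accept_prob P adj) /\
    (~ Q adj -> 1 - qnih_accept_prob P adj >= 2%:R / 3%:R).

(* Main.v *)
Require Import Defs.
From HB Require Import structures.
From mathcomp Require Import all_boot all_order all_algebra.
From mathcomp Require Import reals complex.
From mathcomp Require Import all_field.
From mathcomp Require Import ring lra zify.
Import Order.TTheory GRing.Theory Num.Theory.
Local Open Scope ring_scope.

Set Implicit Arguments. Unset Strict Implicit. Unset Printing Implicit Defensive.

Section Q.
Variable R : realType.
Local Notation C := R[i].


Definition rc (r : R) : C := real_complex R r.
Local Notation "r %:RC" := (rc r) (at level 2, format "r %:RC").
Lemma conjR (r : R) : (rc r)^* = rc r.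
Proof. exact: conjc_real. Qed.
Lemma rcM (a b : R) : rc (a * b) = rc a * rc b.
Proof. exact: (rmorphM (real_complex R)). Qed.
Lemma rcD (a b : R) : rc (a + b) = rc a + rc b.
Proof. exact: (rmorphD (real_complex R)). Qed.
Lemma rcB (a b : R) : rc (a - b) = rc a - rc b.
Proof. exact: (rmorphB (real_complex R)). Qed.
Lemma rcV (a : R) : rc (a^-1) = (rc a)^-1.
Proof. exact: (fmorphV (real_complex R)). Qed.
Lemma rc0 : rc 0 = 0. Proof. exact: (rmorph0 (real_complex R)). Qed.
Lemma rc1 : rc 1 = 1. Proof. exact: (rmorph1 (real_complex R)). Qed.
Lemma rcn n : rc n%:R = n%:R. Proof. exact: (rmorph_nat (real_complex R)). Qed.
Lemma rc_sum (I : finType) (P : pred I) (F : I -> R) :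
  rc (\sum_(i | P i) F i) = \sum_(i | P i) rc (F i).
Proof. exact: (rmorph_sum (real_complex R)). Qed.
Lemma rc_prod (I : finType) (P : pred I) (F : I -> R) :
  rc (\prod_(i | P i) F i) = \prod_(i | P i) rc (F i).
Proof. exact: (rmorph_prod (real_complex R)). Qed.
Lemma rc_le (a b : R) : (rc a <= rc b) = (a <= b).
Proof. exact: lecR. Qed.

Definition Qf (T : finType) (A : T -> T -> C) (x : T -> C) : C :=
  \sum_i \sum_j (x i)^* * A i j * x j.

Definition beta (T : finType) (g : T -> R) (x : T -> C) : C :=
  \sum_t (g t)%:RC * x t.

Lemma Q_rank1 (T : finType) (g : T -> R) x :
  Qf (fun i j => (g i * g j)%:RC) x = (beta g x)^* * beta g x.
Proof.
rewrite /Qf /beta rmorph_sum mulr_suml; apply: eq_bigr => i _.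
rewrite mulr_sumr; apply: eq_bigr => j _.
by rewrite rmorphM /= conjR rcM; ring.
Qed.

Lemma Q_sum (I T : finType) (A : I -> T -> T -> C) x :
  Qf (fun i j => \sum_c A c i j) x = \sum_c Qf (A c) x.
Proof.
rewrite /Qf; under eq_bigr do under eq_bigr do rewrite mulr_sumr mulr_suml.
by rewrite [RHS]exchange_big; apply: eq_bigr => i _; rewrite [RHS]exchange_big.
Qed.

Lemma Q_rank1sum (I T : finType) (g : I -> T -> R) x :
  Qf (fun i j => \sum_c (g c i * g c j)%:RC) x = \sum_c (beta (g c) x)^* * beta (g c) x.
Proof. by rewrite Q_sum; apply: eq_bigr => c _; rewrite Q_rank1. Qed.

Lemma Q_id (T : finType) x :
  Qf (fun i j : T => (i == j)%:R) x = \sum_i (x i)^* * x i.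
Proof.
rewrite /Qf; apply: eq_bigr => i _.
rewrite (bigD1 i) //= eqxx mulr1 big1 ?addr0 // => j; rewrite eq_sym => /negbTE ->.
by rewrite mulr0 mul0r.
Qed.

Lemma Q_sub (T : finType) (A B : T -> T -> C) x :
  Qf (fun i j => A i j - B i j) x = Qf A x - Qf B x.
Proof.
rewrite /Qf -sumrB; apply: eq_bigr => i _; rewrite -sumrB.
by apply: eq_bigr => j _; ring.
Qed.

Lemma normsq_ge0 (z : C) : 0 <= z^* * z.
Proof. by rewrite mulrC; apply: mul_conjC_ge0. Qed.

Lemma bessel (I T : finType) (g : I -> T -> R) (x : T -> C) :
  (forall c c', \sum_t g c t * g c' t = (c == c')%:R) ->
  \sum_t (x t)^* * x t - \sum_c (beta (g c) x)^* * beta (g c) x =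
  \sum_t (x t - \sum_c beta (g c) x * (g c t)%:RC)^* *
         (x t - \sum_c beta (g c) x * (g c t)%:RC).
Proof.
move=> on.
set b := fun c => beta (g c) x.
have E1 : \sum_t (x t)^* * (\sum_c b c * (g c t)%:RC) = \sum_c (b c)^* * b c.
  under eq_bigr do rewrite mulr_sumr.
  rewrite exchange_big; apply: eq_bigr => c _.
  rewrite /b /beta rmorph_sum mulr_suml; apply: eq_bigr => t _.
  by rewrite rmorphM /= conjR; ring.
have E2 : \sum_t (\sum_c b c * (g c t)%:RC)^* * x t = \sum_c (b c)^* * b c.
  under eq_bigr do rewrite rmorph_sum mulr_suml.
  rewrite exchange_big; apply: eq_bigr => c _.
  rewrite /b /beta mulr_sumr; apply: eq_bigr => t _.
  by rewrite rmorphM /= conjR; ring.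
have E3 : \sum_t (\sum_c b c * (g c t)%:RC)^* * (\sum_c b c * (g c t)%:RC)
          = \sum_c (b c)^* * b c.
  under eq_bigr do rewrite rmorph_sum mulr_suml.
  rewrite exchange_big; apply: eq_bigr => c _.
  under eq_bigr do rewrite mulr_sumr.
  rewrite exchange_big /=.
  rewrite (bigD1 c) //= [X in _ + X]big1 ?addr0.
    transitivity ((b c)^* * b c * (\sum_t g c t * g c t)%:RC).
      rewrite rc_sum mulr_sumr; apply: eq_bigr => t _.
      by rewrite rmorphM /= rcM conjR; ring.
    by rewrite on eqxx rc1 mulr1.
  move=> c' /negbTE nc.
  transitivity ((b c)^* * b c' * (\sum_t g c t * g c' t)%:RC).
    rewrite rc_sum mulr_sumr; apply: eq_bigr => t _.
    by rewrite rmorphM /= rcM conjR; ring.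
  by rewrite on eq_sym nc rc0 mulr0.
have -> : \sum_t (x t - \sum_c b c * (g c t)%:RC)^* * (x t - \sum_c b c * (g c t)%:RC)
  = \sum_t (x t)^* * x t - \sum_t (x t)^* * (\sum_c b c * (g c t)%:RC)
    - \sum_t (\sum_c b c * (g c t)%:RC)^* * x t
    + \sum_t (\sum_c b c * (g c t)%:RC)^* * (\sum_c b c * (g c t)%:RC).
  rewrite -!sumrB -big_split /=; apply: eq_bigr => t _.
  by rewrite rmorphB /=; ring.
rewrite E1 E2 E3; ring.
Qed.

End Q.

Section Eff.
Variable R : realType.
Local Notation C := R[i].
Local Notation "r %:RC" := (rc r) (at level 2, format "r %:RC").

Lemma psd_rank1sum (I T : finType) (g : I -> T -> R) :
  psd (fun i j => \sum_c (g c i * g c j)%:RC).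
Proof.
move=> x; have := Q_rank1sum g x; rewrite /Qf => ->.
by apply: sumr_ge0 => c _; apply: normsq_ge0.
Qed.

Lemma herm_rank1sum (I T : finType) (g : I -> T -> R) :
  Defs.hermitian (fun i j => \sum_c (g c i * g c j)%:RC).
Proof.
move=> i j; rewrite rmorph_sum /=; apply: eq_bigr => c _.
by rewrite conjR mulrC. Qed.

Lemma effect_rank1sum (I T : finType) (g : I -> T -> R) :
  (forall c c', \sum_t g c t * g c' t = (c == c')%:R) ->
  effect (fun i j => \sum_c (g c i * g c j)%:RC).
Proof.
move=> on; split; [exact: herm_rank1sum | exact: psd_rank1sum |].
move=> x; have := Q_sub (fun i j : T => (i == j)%:R) (fun i j => \sum_c (g c i * g c j)%:RC) x.
rewrite /Qf => ->.
have := Q_id x; rewrite /Qf => ->.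
have := Q_rank1sum g x; rewrite /Qf => ->.
rewrite bessel //; apply: sumr_ge0 => t _; apply: normsq_ge0.
Qed.

Lemma density_rank1 (T : finType) (g : T -> R) :
  \sum_t g t * g t = 1 -> density (fun i j => (g i * g j)%:RC).
Proof.
move=> n1; split.
- by move=> i j; rewrite conjR mulrC.
- move=> x; have := Q_rank1 g x; rewrite /Qf => ->; exact: normsq_ge0.
- by rewrite -rc_sum n1 rc1.
Qed.

End Eff.

Section FP.
Variable R : realType.
Variable k : nat.
Variables (K : finType) (F : finFieldType) (T : finType).
Variable dec : T -> (K * (F * F))%type.
Hypothesis dec_bij : bijective dec.
Variable amp : R.
Hypothesis amp2 : amp * amp * #|F|%:R = 1.

Definition pol (S : {set 'I_k}) : {poly F} :=
  \poly_(i < k) ([exists j in S, val j == i])%:R.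

Definition phi (c : K) (S : {set 'I_k}) (i : T) : R :=
  if ((dec i).1 == c) && ((dec i).2.2 == (pol S).[(dec i).2.1]) then amp else 0.

Definition cnt (S S' : {set 'I_k}) := #|[set x : F | (pol S).[x] == (pol S').[x]]|.

Lemma sum_dec (h : (K * (F * F))%type -> R) : \sum_i h (dec i) = \sum_a h a.
Proof. by rewrite (reindex dec) //; apply: onW_bij. Qed.

Lemma ip_phi c S c' S' :
  \sum_i phi c S i * phi c' S' i = (c == c')%:R * (cnt S S')%:R * (amp * amp).
Proof.
rewrite /phi (sum_dec (fun a =>
   (if (a.1 == c) && (a.2.2 == (pol S).[a.2.1]) then amp else 0) *
   (if (a.1 == c') && (a.2.2 == (pol S').[a.2.1]) then amp else 0))).
rewrite -(pair_big xpredT xpredT (fun a b =>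
   (if (a == c) && (b.2 == (pol S).[b.1]) then amp else 0) *
   (if (a == c') && (b.2 == (pol S').[b.1]) then amp else 0))) /=.
rewrite (bigD1 c) //= [X in _ + X]big1 ?addr0; last first.
  move=> d /negbTE dc; apply: big1 => p _; by rewrite dc /= mul0r.
rewrite eqxx /=; case: eqP => [Ecc|ncc]; last first.
  rewrite mul0r mul0r; apply: big1 => p _; by rewrite /= mulr0.
rewrite mul1r /=.
rewrite -(pair_big xpredT xpredT (fun x y =>
   (if (y == (pol S).[x]) then amp else 0) *
   (if (y == (pol S').[x]) then amp else 0))) /=.
transitivity (\sum_x (((pol S).[x] == (pol S').[x])%:R * (amp * amp))).
  apply: eq_bigr => x _; rewrite (bigD1 (pol S).[x]) //= big1 ?addr0; last first.
    by move=> y /negbTE ->; rewrite mul0r.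
  by rewrite eqxx eq_sym; case: eqP => _; rewrite ?mul1r ?mul0r ?mulr0.
rewrite -mulr_suml; congr (_ * _).
rewrite /cnt -sum1_card natr_sum [RHS]big_mkcond /=; apply: eq_bigr => x _.
by rewrite inE; case: eqP.
Qed.

Lemma pol_inj S S' : pol S = pol S' -> S = S'.
Proof.
move=> E; apply/setP => j.
have := congr1 (fun p : {poly F} => p`_(val j)) E.
rewrite /pol !coef_poly ltn_ord /=.
have ex A : [exists j0 in A, val j0 == val j] = (j \in A).
  apply/existsP/idP => [[j0 /andP[H /eqP/val_inj <-]] // | H].
  by exists j; rewrite H eqxx.
rewrite !ex.
by case: (j \in S); case: (j \in S') => //= /eqP; rewrite ?oner_eq0 // eq_sym oner_eq0.
Qed.

Lemma cnt_same S : cnt S S = #|F|.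
Proof. by rewrite /cnt; apply: eq_card => x; rewrite inE eqxx. Qed.

Lemma cnt_lt S S' : S != S' -> (cnt S S' < k)%N.
Proof.
move=> nSS.
have pn0 : pol S - pol S' != 0.
  by rewrite subr_eq0; apply: contra nSS => /eqP /pol_inj ->.
have := max_poly_roots pn0 (rs := enum [set x : F | (pol S).[x] == (pol S').[x]]).
rewrite /cnt cardE.
move=> H; apply: (leq_trans (H _ _)).
- by apply/allP => x; rewrite mem_enum inE /root hornerD hornerN subr_eq0.
- exact: enum_uniq.
- apply: leq_trans (size_polyD _ _) _.
  by rewrite size_polyN geq_max !size_poly.
Qed.


Definition Gs (c : {ffun 'I_k -> K}) (w : 'I_k) : {set 'I_k} := [set u | c u == c w].
Definition hj (c : {ffun 'I_k -> K}) (b : {ffun 'I_k -> T}) : R :=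
  \prod_w phi (c w) (Gs c w) (b w).

Lemma sum_prod (Fn : 'I_k -> T -> R) :
  \sum_(b : {ffun 'I_k -> T}) \prod_w Fn w (b w) = \prod_w \sum_i Fn w i.
Proof. by rewrite bigA_distr_bigA. Qed.

Lemma ffun_neq (c c' : {ffun 'I_k -> K}) : c != c' -> exists w, c w != c' w.
Proof.
move=> ne; case: (boolP [exists w, c w != c' w]) => [/existsP // | H].
case/eqP: ne; apply/ffunP => w; apply/eqP.
by move: H; rewrite negb_exists => /forallP /(_ w); rewrite negbK.
Qed.

Lemma prod0 (Fn : 'I_k -> R) w : Fn w = 0 -> \prod_w Fn w = 0.
Proof. by move=> H; rewrite (bigD1 w) //= H mul0r. Qed.

Lemma hj_orth c c' : \sum_b hj c b * hj c' b = (c == c')%:R.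
Proof.
under eq_bigr do rewrite /hj -big_split /=.
rewrite (sum_prod (fun w i => phi (c w) (Gs c w) i * phi (c' w) (Gs c' w) i)).
under eq_bigr do rewrite ip_phi.
case: eqP => [<- | /eqP ne].
  apply: big1 => w _; rewrite eqxx cnt_same mul1r mulrC; exact: amp2.
have [w nw] := ffun_neq ne.
transitivity (0:R); last by []. by apply: (@prod0 (fun i => (c i == c' i)%:R * (cnt (Gs c i) (Gs c' i))%:R * (amp * amp)) w); rewrite (negbTE nw) !mul0r.
Qed.

Variable c0 : {ffun 'I_k -> K}.
Variable Sw : 'I_k -> {set 'I_k}.
Definition mw w := phi (c0 w) (Sw w).
Definition Mb (b : {ffun 'I_k -> T}) := \prod_w mw w (b w).
Definition sc (c : {ffun 'I_k -> K}) :=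
  \prod_w ((c w == c0 w)%:R * (cnt (Gs c w) (Sw w))%:R * (amp * amp)).

Lemma sum_hM c : \sum_b hj c b * Mb b = sc c.
Proof.
under eq_bigr do rewrite /hj /Mb -big_split /=.
rewrite (sum_prod (fun w i => phi (c w) (Gs c w) i * mw w i)).
by apply: eq_bigr => w _; rewrite ip_phi.
Qed.

Lemma sc_neq c : c != c0 -> sc c = 0.
Proof.
move=> ne; have [w nw] := ffun_neq ne.
by rewrite /sc; apply: (@prod0 (fun w => (c w == c0 w)%:R * (cnt (Gs c w) (Sw w))%:R * (amp * amp)) w); rewrite (negbTE nw) !mul0r.
Qed.

Lemma acc_formula :
  \sum_b \sum_b' (\sum_c rc (hj c b * hj c b')) * \prod_w rc (mw w (b' w) * mw w (b w))
  = rc (sc c0 ^+ 2).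
Proof.
under eq_bigr do under eq_bigr do rewrite -rc_sum -rc_prod -rcM.
under eq_bigr do rewrite -rc_sum.
rewrite -rc_sum; congr rc.
transitivity (\sum_c (\sum_b hj c b * Mb b) * (\sum_b' hj c b' * Mb b')).
  transitivity (\sum_b \sum_b' \sum_c (hj c b * Mb b) * (hj c b' * Mb b')).
    apply: eq_bigr => b _; apply: eq_bigr => b' _.
    rewrite big_split /= -/(Mb b') -/(Mb b) mulr_suml; apply: eq_bigr => c _.
    ring.
  under eq_bigr do rewrite exchange_big.
  rewrite exchange_big; apply: eq_bigr => c _.
  rewrite mulr_suml; apply: eq_bigr => b _.
  by rewrite mulr_sumr.
under eq_bigr do rewrite sum_hM.
rewrite (bigD1 c0) //= big1 ?addr0 ?expr2 // => c ne.
by rewrite sc_neq ?mul0r.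
Qed.

Lemma sc_c0_eq1 : (forall w, Gs c0 w = Sw w) -> sc c0 = 1.
Proof.
move=> H; apply: big1 => w _; rewrite eqxx H cnt_same mul1r mulrC; exact: amp2.
Qed.

Lemma cnt_le S S' : (cnt S S' <= #|F|)%N.
Proof. exact: max_card. Qed.

Lemma sc_c0_le : (2 * k <= #|F|)%N -> (exists v, Gs c0 v != Sw v) ->
  0 <= sc c0 <= 1 / 2%:R.
Proof.
move=> HF [v nv].
have a2 : 0 <= amp * amp by rewrite -expr2 sqr_ge0.
have fact w : 0 <= (c0 w == c0 w)%:R * (cnt (Gs c0 w) (Sw w))%:R * (amp * amp) <= 1.
  rewrite eqxx mul1r; apply/andP; split; first by rewrite mulr_ge0.
  apply: (@le_trans _ _ (#|F|%:R * (amp * amp))); last by rewrite mulrC amp2.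
  by rewrite ler_wpM2r // ler_nat cnt_le.
apply/andP; split.
  by apply: prodr_ge0 => w _; case/andP: (fact w).
rewrite /sc (bigD1 v) //=.
have Hr : \prod_(i | i != v) ((c0 i == c0 i)%:R * (cnt (Gs c0 i) (Sw i))%:R * (amp * amp)) <= 1.
  by apply: prodr_ile1 => w _; apply: fact.
have Hr0 : 0 <= \prod_(i | i != v) ((c0 i == c0 i)%:R * (cnt (Gs c0 i) (Sw i))%:R * (amp * amp)).
  by apply: prodr_ge0 => w _; case/andP: (fact w).
have Hv : (cnt (Gs c0 v) (Sw v))%:R * (amp * amp) <= 1 / 2%:R.
  have h1 : (cnt (Gs c0 v) (Sw v))%:R <= k%:R :> R.
    by rewrite ler_nat ltnW // cnt_lt.
  have h2 : 2%:R * k%:R <= #|F|%:R :> R by rewrite -natrM ler_nat.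
  have := amp2; move: h1 h2 a2.
  set x := (cnt _ _)%:R; set y := k%:R; set z := #|F|%:R; set a := amp * amp.
  move=> h1 h2 a2 h3.
  have : x * a <= y * a by rewrite ler_wpM2r.
  have : 2%:R * y * a <= z * a by rewrite ler_wpM2r.
  rewrite mulrC in h3; rewrite h3 => H1 H2.
  rewrite ler_pdivlMr ?ltr0n //.
  nra.
have Hv0 : 0 <= (cnt (Gs c0 v) (Sw v))%:R * (amp * amp) by rewrite mulr_ge0.
rewrite eqxx [X in X * _ * _]/=.
move: Hr Hr0 Hv Hv0.
set P := \prod_(i | i != v) _.
set X := (cnt _ _)%:R * _.
move=> Hr Hr0 Hv Hv0.
have -> : true%:R * (cnt (Gs c0 v) (Sw v))%:R * (amp * amp) * P = X * P.
  by rewrite mul1r.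
nra.
Qed.
End FP.

Section Graph.
Variable k : nat.
Variable adj : 'I_k -> 'I_k -> bool.
Hypothesis sg : simple_graph adj.

Definition Rl (u v : 'I_k) := (u == v) || adj u v.

Lemma Rl_sym u v : Rl u v = Rl v u.
Proof. by rewrite /Rl eq_sym (proj1 sg). Qed.

Lemma Rl_refl u : Rl u u.
Proof. by rewrite /Rl eqxx. Qed.

Lemma Rl_trans (noP3 : ~ has_induced_P3 adj) x y z : Rl x y -> Rl y z -> Rl x z.
Proof.
rewrite /Rl; case: (eqVneq x y) => [-> //| nxy] /= axy.
case: (eqVneq y z) => [<- //| nyz] /= ayz; first by rewrite axy orbT.
case: (eqVneq x z) => //= nxz.
case: (boolP (adj x z)) => // naxz; exfalso; apply: noP3.
by exists x, y, z; split => //; rewrite axy ayz naxz.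
Qed.

Definition Sset w := [set u | Rl w u].
Definition rep' (w : 'I_k) := odflt w [pick u in Sset w].

Lemma rep_in w : rep' w \in Sset w.
Proof.
rewrite /rep'; case: pickP => [z Hz // | H].
by move: (H w); rewrite inE Rl_refl.
Qed.

Lemma rep_eq u w : Sset u = Sset w -> rep' u = rep' w.
Proof.
move=> E; rewrite /rep' E; case: pickP => [z _ // | H].
by move: (H w); rewrite inE Rl_refl.
Qed.

Variables (K : finType) (emb : 'I_k -> K).
Hypothesis emb_inj : injective emb.

Lemma cluster_G (noP3 : ~ has_induced_P3 adj) w :
  [set u | emb (rep' u) == emb (rep' w)] = Sset w.
Proof.
apply/setP => u; rewrite !inE (inj_eq emb_inj).
apply/eqP/idP => [E | Hwu].
- have h1 := rep_in u; have h2 := rep_in w.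
  rewrite E !inE in h1 h2.
  by apply: (Rl_trans noP3 h2); rewrite Rl_sym.
- apply: rep_eq; apply/setP => x; rewrite !inE.
  apply/idP/idP => H.
  + by apply: (Rl_trans noP3 Hwu).
  + by apply: (Rl_trans noP3 _ H); rewrite Rl_sym.
Qed.

Lemma G_noP3 : (forall w, [set u | emb (rep' u) == emb (rep' w)] = Sset w) ->
  ~ has_induced_P3 adj.
Proof.
move=> H [a [b [c [nab nbc nac /and3P [ab bc nac']]]]].
have Eb : emb (rep' b) = emb (rep' a).
  have : b \in Sset a by rewrite inE /Rl ab orbT.
  by rewrite -H inE => /eqP.
have Ec : emb (rep' c) = emb (rep' b).
  have : c \in Sset b by rewrite inE /Rl bc orbT.
  by rewrite -H inE => /eqP.
have : c \in Sset a by rewrite -H inE Ec Eb.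
by rewrite inE /Rl (negbTE nac) (negbTE nac').
Qed.

End Graph.

Section Proto.
Variable R : realType.
Variables (k q : nat) (K : finType) (F : finFieldType).
Variable dec : 'I_(2 ^ q) -> (K * (F * F))%type.
Hypothesis dec_bij : bijective dec.
Variable amp : R.
Hypothesis amp2 : amp * amp * #|F|%:R = 1.
Variable emb : 'I_k -> K.
Hypothesis emb_inj : injective emb.
Hypothesis HF : (2 * k <= #|F|)%N.

Definition Sn v (nu : {ffun 'I_k -> bool}) : {set 'I_k} := [set u | (u == v) || nu u].
Definition repn v nu := odflt v [pick u in Sn v nu].
Definition msgv v nu : 'I_(2 ^ q) -> R := phi dec amp (emb (repn v nu)) (Sn v nu).

Definition theP : qnih_protocol R k :=
  @QNIH R k (fun _ => q) (fun v nu i j => rc (msgv v nu i * msgv v nu j))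
     (fun b b' => \sum_c rc (hj dec amp c b * hj dec amp c b')).

Lemma theP_valid : qnih_valid theP.
Proof.
split.
- move=> v nu; apply: density_rank1.
  by rewrite /msgv ip_phi // eqxx cnt_same mul1r mulrC.
- apply: (effect_rank1sum (g := fun c b => hj dec amp c b)).
  exact: hj_orth.
Qed.


Lemma theP_cost : qnih_cost theP = (k * q)%N.
Proof. by rewrite /qnih_cost /= sum_nat_const card_ord. Qed.

Lemma rc23 : (2%:R / 3%:R : R[i]) = rc (2%:R / 3%:R).
Proof. by rewrite rcM rcV !rcn. Qed.

Section Adj.
Variable adj : 'I_k -> 'I_k -> bool.
Hypothesis sg : simple_graph adj.
Let c0 : {ffun 'I_k -> K} := [ffun w => emb (rep' adj w)].
Let Sw := Sset adj.

Lemma Sn_nbhd w : Sn w (nbhd_vec adj w) = Sset adj w.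
Proof. by apply/setP => u; rewrite /Sset /Sn !inE /nbhd_vec ffunE /Rl eq_sym. Qed.

Lemma msgv_nbhd w : msgv w (nbhd_vec adj w) = mw dec amp c0 Sw w.
Proof. by rewrite /msgv /mw /repn Sn_nbhd /c0 ffunE. Qed.

Lemma Gs_c0 w : Gs c0 w = [set u | emb (rep' adj u) == emb (rep' adj w)].
Proof. by apply/setP => u; rewrite !inE !ffunE. Qed.

Lemma acc_prob : qnih_accept_prob theP adj = rc (sc F amp c0 Sw c0 ^+ 2).
Proof.
rewrite -(acc_formula dec_bij amp c0 Sw).
rewrite /qnih_accept_prob /tr_prod /qnih_joint /=.
apply: eq_bigr => b _; apply: eq_bigr => b' _; congr (_ * _).
by apply: eq_bigr => w _; rewrite msgv_nbhd.
Qed.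

End Adj.

Lemma theP_decides : qnih_decides theP (fun adj => ~ has_induced_P3 adj).
Proof.
move=> adj sg; rewrite acc_prob.
set c0 := [ffun w => emb (rep' adj w)].
case: (boolP [forall w, Gs c0 w == Sset adj w]) => [/forallP H | ].
  have Heq w : Gs c0 w = Sset adj w by apply/eqP.
  rewrite (sc_c0_eq1 amp2 Heq) expr1n rc1; split.
    by move=> _; rewrite rc23 -rc1 rc_le; lra.
  move=> nQ; exfalso; apply: nQ; apply: (@G_noP3 _ adj _ emb) => w.
  by rewrite -Gs_c0 Heq.
rewrite negb_forall => /existsP [v nv]; split.
  move=> noP3; exfalso; move: nv.
  by rewrite Gs_c0 (cluster_G sg emb_inj noP3) eqxx.
move=> _.
have /andP [h0 h1] := sc_c0_le amp2 HF (ex_intro _ v nv).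
rewrite rc23 -rc1 -rcB rc_le.
set s := sc _ _ _ _ _ in h0 h1 *.
nra.
Qed.
End Proto.

Theorem mainTheorem6 (R : realType) :
  exists C N : nat, forall k : nat, (N <= k)%N ->
    exists P : qnih_protocol R k,
      [/\ qnih_valid P,
          (qnih_cost P <= C * k * (trunc_log 2 k) ^ 2)%N
        & qnih_decides P (fun adj => ~ has_induced_P3 adj)].
Proof.
exists 10%N, 2%N => k k2.
set L := trunc_log 2 k.
have L1 : (0 < L)%N by rewrite /L trunc_log_gt0.
set r := L.+1.
have kr : (k < 2 ^ r)%N by apply: trunc_log_ltn.
have [F _ cardF] := @pPrimePowerField 2 (2 * r) (erefl _) (erefl _).
pose K := 'I_(2 ^ r).
pose emb := fun i : 'I_k => widen_ord (ltnW kr) i.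
have emb_inj : injective emb.
  by move=> x y /(congr1 val) /= /val_inj.
pose q := (5 * r)%N.
have cardA : #|{: K * (F * F)}| = (2 ^ q)%N.
  rewrite !card_prod card_ord cardF -!expnD /q; congr (expn 2 _); rewrite /r; lia.
pose dec := fun i : 'I_(2 ^ q) => enum_val (cast_ord (esym cardA) i).
have dec_bij : bijective dec.
  apply: (bij_comp (enum_val_bij _)).
  by exists (cast_ord cardA) => i; rewrite ?cast_ordK ?cast_ordKV.
pose amp : R := ((2 ^ r)%:R)^-1.
have amp2 : amp * amp * #|F|%:R = 1.
  have h : (2 ^ r)%:R != 0 :> R by rewrite pnatr_eq0 expn_eq0.
  rewrite cardF mul2n -addnn expnD natrM /amp; field; exact: h.
have HF : (2 * k <= #|F|)%N.
  rewrite cardF (mulnC 2 r) expnM /r expnS.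
  have : (0 < 2 ^ L)%N by rewrite expn_gt0.
  have := kr; rewrite /r expnS; set X := (2 ^ L)%N; nia.
exists (theP dec amp emb); split.
- exact: (theP_valid dec_bij amp2).
- rewrite theP_cost /q /r; nia.
- exact: (theP_decides dec_bij amp2 emb_inj HF).
Qed.
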